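(* Let $A$ be an $\mathbb{R}$-algebra and $B$ an $A$-algebra with structure morphism $\iota:A\to B$. If $B$ has the substitution property over $A$, then the induced map $\mathrm{Spec}_r B\to \mathrm{Spec}_r A$ is bijective and continuous, both with respect to the real spectrum topology and with respect to the constructible topology.
   Context: Substitution property: for every real closed field $R$ and every ring homomorphism $\phi:A\to R$ there exists one and only one ring homomorphism $\psi:B\to R$ with $\psi\circ\iota=\phi$. The real spectrum $\mathrm{Spec}_r A$ of a ring $A$ is the set of equivalence classes of ring homomorphisms from $A$ into real closed fields, for the equivalence relation generated by $\pi\sim\pi'$ when $\pi':A\to R'$ factors as $\pi$ followed by a field homomorphism $R\to R'$. The real spectrum topology has as basis the sets $\{\alpha\mid a(\alpha)>0\}$ (finite intersections thereof), $a\in A$; the constructible topology is generated by boolean combinations of such sets. The map $\mathrm{Spec}_r B\to\mathrm{Spec}_r A$ sends the class of $\beta$ to the class of $\beta\circ\iota$. *)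

(* Defs.v *)
From HB Require Import structures.
From Stdlib Require Import Relation_Operators ClassicalEpsilon.
From mathcomp Require Import all_boot all_order all_algebra.
From mathcomp Require Import Rstruct.
Set Implicit Arguments. Unset Strict Implicit. Unset Printing Implicit Defensive.
Import Order.TTheory GRing.Theory Num.Theory.
Local Open Scope ring_scope.

Definition Rreal : comUnitRingType := Rdefinitions.R.

(* A representative of a point of the real spectrum: a ring homomorphism
   from A into some real closed field. *)
Definition rpoint (A : comPzRingType) := {R : rcfType & {rmorphism A -> R}}.

Definition rfactor (A : comPzRingType) (p q : rpoint A) : Prop :=
  exists f : {rmorphism projT1 p -> projT1 q},
    forall a : A, projT2 q a = f (projT2 p a).

Definition requiv (A : comPzRingType) : rpoint A -> rpoint A -> Prop :=
  clos_refl_sym_trans (rpoint A) (@rfactor A).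

Definition rclass (A : comPzRingType) (p : rpoint A) : rpoint A -> Prop :=
  requiv p.

Definition Spec_r (A : comPzRingType) :=
  {C : rpoint A -> Prop | exists p, C = rclass p}.

Definition rpos (A : comPzRingType) (a : A) (x : Spec_r A) : Prop :=
  exists p, sval x p /\ 0 < projT2 p a.

(* Real spectrum topology: basis = finite intersections of {a > 0}. *)
Definition rs_open (A : comPzRingType) (U : Spec_r A -> Prop) : Prop :=
  forall x, U x -> exists s : seq A,
    List.Forall (fun a => rpos a x) s /\
    forall y, List.Forall (fun a => rpos a y) s -> U y.

Inductive cform (A : Type) : Type :=
| CTrue
| CPos of A
| CNot of cform A
| CAnd of cform A & cform A
| COr of cform A & cform A.

Fixpoint csat (A : comPzRingType) (f : cform A) (x : Spec_r A) : Prop :=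
  match f with
  | CTrue => True
  | CPos a => rpos a x
  | CNot g => ~ csat g x
  | CAnd g h => csat g x /\ csat h x
  | COr g h => csat g x \/ csat h x
  end.

(* Constructible topology: generated by the constructible sets (which form
   a basis, being closed under finite intersection). *)
Definition con_open (A : comPzRingType) (U : Spec_r A -> Prop) : Prop :=
  forall x, U x -> exists f : cform A,
    csat f x /\ forall y, csat f y -> U y.

Definition rpull (A B : comPzRingType) (iota : {rmorphism A -> B})
  (p : rpoint B) : rpoint A :=
  existT _ (projT1 p) (projT2 p \o iota : {rmorphism A -> projT1 p}).

Definition spec_map (A B : comPzRingType) (iota : {rmorphism A -> B})
  (x : Spec_r B) : Spec_r A :=
  let p := proj1_sig (constructive_indefinite_description _ (proj2_sig x)) in
  exist _ (rclass (rpull iota p)) (ex_intro _ (rpull iota p) erefl).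

Definition substitution_property (A B : comPzRingType)
  (iota : {rmorphism A -> B}) : Prop :=
  forall (R : rcfType) (phi : {rmorphism A -> R}),
    exists psi : {rmorphism B -> R},
      (forall a, psi (iota a) = phi a) /\
      forall psi' : {rmorphism B -> R},
        (forall a, psi' (iota a) = phi a) -> forall b, psi' b = psi b.

Definition continuous_wrt (X Y : Type) (openX : (X -> Prop) -> Prop)
  (openY : (Y -> Prop) -> Prop) (f : X -> Y) : Prop :=
  forall U, openY U -> openX (fun x => U (f x)).

(* Main.v *)
Require Import Defs.
From HB Require Import structures.
From Stdlib Require Import Relation_Operators ClassicalEpsilon FunctionalExtensionality PropExtensionality ProofIrrelevance.
From mathcomp Require Import all_boot all_order all_algebra.
From mathcomp Require Import Rstruct.
Set Implicit Arguments. Unset Strict Implicit. Unset Printing Implicit Defensive.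
Import Order.TTheory GRing.Theory Num.Theory.
Local Open Scope ring_scope.

Lemma rmorph_pos (R1 R2 : rcfType) (f : {rmorphism R1 -> R2}) (x : R1) :
  (0 < f x) = (0 < x).
Proof.
have key : forall y : R1, 0 < y -> 0 < f y.
  move=> y y0; rewrite -(sqr_sqrtr (ltW y0)) rmorphXn /=.
  by rewrite lt_def sqr_ge0 andbT sqrf_eq0 fmorph_eq0 sqrtr_eq0 -ltNge y0.
apply/idP/idP; last exact: key.
move=> h; rewrite ltNge; apply/negP => hx.
have : 0 <= - x by rewrite oppr_ge0.
rewrite le0r => /orP [/eqP e| ]; first by move: h; rewrite -(opprK x) e oppr0 rmorph0 ltxx.
move=> hh; move: (key _ hh); rewrite rmorphN /= oppr_gt0 => h2.
by move: (lt_trans h2 h); rewrite ltxx.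
Qed.

Section S.
Variable A : comPzRingType.

Lemma requiv_pos (p q : rpoint A) a : requiv p q -> (0 < projT2 p a <-> 0 < projT2 q a).
Proof.
elim=> {p q} [p q [f hf]| p | p q _ IH | p q r _ IH1 _ IH2].
- by rewrite hf rmorph_pos.
- by [].
- by split=> h; apply/IH.
- by split=> h; [apply/IH2/IH1 | apply/IH1/IH2].
Qed.

Definition rep (x : Spec_r A) : rpoint A :=
  proj1_sig (constructive_indefinite_description _ (proj2_sig x)).

Lemma rep_spec x : sval x = rclass (rep x).
Proof. exact: (proj2_sig (constructive_indefinite_description _ (proj2_sig x))). Qed.

Lemma requiv_sym (p q : rpoint A) : requiv p q -> requiv q p.
Proof. exact: rst_sym. Qed.
Lemma requiv_trans (p q r : rpoint A) : requiv p q -> requiv q r -> requiv p r.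
Proof. exact: rst_trans. Qed.

Lemma rep_in x : sval x (rep x).
Proof. rewrite rep_spec; exact: rst_refl. Qed.

Lemma rpos_rep (a : A) x p : sval x p -> (rpos a x <-> 0 < projT2 p a).
Proof.
rewrite rep_spec => hp; split.
- move=> [q [hq h]]; rewrite rep_spec in hq.
  exact: (proj1 (requiv_pos a (requiv_trans (requiv_sym hq) hp)) h).
- by move=> h; exists p; rewrite rep_spec.
Qed.

Lemma class_eq (p q : rpoint A) : requiv p q -> rclass p = rclass q.
Proof.
move=> h; apply: functional_extensionality => r; apply: propositional_extensionality.
split=> h'; [exact: requiv_trans (requiv_sym h) h' | exact: requiv_trans h h'].
Qed.

Lemma spec_eq (x y : Spec_r A) : sval x = sval y -> x = y.
Proof.
case: x => [x hx]; case: y => [y hy] /= e; subst y; f_equal; apply: proof_irrelevance.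
Qed.

End S.

Section T.
Variables (A B : comPzRingType) (iota : {rmorphism A -> B}).

Lemma rpull_val (p : rpoint B) a : projT2 (rpull iota p) a = projT2 p (iota a).
Proof. by []. Qed.

Lemma rpull_requiv (p q : rpoint B) : requiv p q -> requiv (rpull iota p) (rpull iota q).
Proof.
elim=> {p q} [p q [f hf]| p | p q _ IH | p q r _ IH1 _ IH2].
- apply: rst_step; exists f => a; exact: hf.
- exact: rst_refl.
- exact: rst_sym.
- exact: rst_trans IH1 IH2.
Qed.

Lemma spec_map_rep x : sval (spec_map iota x) = rclass (rpull iota (rep x)).
Proof. by []. Qed.

Lemma rpos_map (a : A) x : rpos a (spec_map iota x) <-> rpos (iota a) x.
Proof.
rewrite (rpos_rep a (p := rpull iota (rep x))); last by rewrite spec_map_rep; exact: rst_refl.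
by rewrite (rpos_rep _ (rep_in x)) rpull_val.
Qed.

Fixpoint cmap (f : cform A) : cform B :=
  match f with
  | CTrue => CTrue _
  | CPos a => CPos (iota a)
  | CNot g => CNot (cmap g)
  | CAnd g h => CAnd (cmap g) (cmap h)
  | COr g h => COr (cmap g) (cmap h)
  end.

Lemma csat_map f x : csat f (spec_map iota x) <-> csat (cmap f) x.
Proof.
elim: f => /=.
- by [].
- move=> a; exact: rpos_map.
- by move=> g IH; rewrite IH.
- by move=> g IHg h IHh; rewrite IHg IHh.
- by move=> g IHg h IHh; rewrite IHg IHh.
Qed.

Lemma cont_con : continuous_wrt (@con_open B) (@con_open A) (spec_map iota).
Proof.
move=> U hU x /hU [f [hf hU']]; exists (cmap f); split.
- by apply/csat_map.
- by move=> y /csat_map /hU'.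
Qed.

Lemma forall_map (s : seq A) x :
  List.Forall (fun a => rpos a (spec_map iota x)) s <->
  List.Forall (fun b => rpos b x) (map iota s).
Proof.
elim: s => [|a s IH] /=; first by split=> _; constructor.
split=> h; inversion h; subst; constructor.
- exact/rpos_map.
- exact/IH.
- exact/rpos_map.
- exact/IH.
Qed.

Lemma cont_rs : continuous_wrt (@rs_open B) (@rs_open A) (spec_map iota).
Proof.
move=> U hU x /hU [s [hs hU2]]; exists (map iota s); split.
- exact/forall_map.
- by move=> y /forall_map /hU2.
Qed.

End T.

Section U.
Variables (A B : comPzRingType) (iota : {rmorphism A -> B}).
Hypothesis H : substitution_property iota.

Definition lift (q : rpoint A) : rpoint B :=
  existT _ (projT1 q) (proj1_sig (constructive_indefinite_description _ (H (projT2 q)))).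

Lemma lift_spec q : (forall a, projT2 (lift q) (iota a) = projT2 q a) /\
  forall psi' : {rmorphism B -> projT1 q},
        (forall a, psi' (iota a) = projT2 q a) -> forall b, psi' b = projT2 (lift q) b.
Proof. exact: (proj2_sig (constructive_indefinite_description _ (H (projT2 q)))). Qed.

Lemma lift_requiv (p q : rpoint A) : requiv p q -> requiv (lift p) (lift q).
Proof.
elim=> {p q} [p q [f hf]| p | p q _ IH | p q r _ IH1 _ IH2].
- apply: rst_step; exists f => b.
  have [h1 _] := lift_spec p.
  have [_ h2] := lift_spec q.
  symmetry; apply: (h2 (f \o projT2 (lift p) : {rmorphism B -> projT1 q})) => a /=.
  by rewrite h1 hf.
- exact: rst_refl.
- exact: rst_sym.
- exact: rst_trans IH1 IH2.
Qed.

Lemma lift_pull (p : rpoint B) : requiv p (lift (rpull iota p)).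
Proof.
apply: rst_step; exists (idfun : {rmorphism projT1 p -> projT1 p}) => b /=.
have [_ h2] := lift_spec (rpull iota p).
by rewrite -(h2 (projT2 p)).
Qed.

Lemma pull_lift (q : rpoint A) : requiv q (rpull iota (lift q)).
Proof.
apply: rst_step; exists (idfun : {rmorphism projT1 q -> projT1 q}) => a /=.
by have [h1 _] := lift_spec q; rewrite h1.
Qed.

Lemma spec_map_inj : injective (spec_map iota).
Proof.
move=> x y e.
have e1 := f_equal (@sval _ _) e; rewrite !spec_map_rep in e1.
have h : rclass (rpull iota (rep x)) (rpull iota (rep y)).
  have e2 := f_equal (fun C => C (rpull iota (rep y))) e1; simpl in e2.
  by rewrite e2; exact: rst_refl.
have h' := lift_requiv h.
have h2 : requiv (rep x) (rep y).
  exact: requiv_trans (lift_pull _) (requiv_trans h' (requiv_sym (lift_pull _))).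
by apply: spec_eq; rewrite !rep_spec; apply: class_eq.
Qed.

Definition gmap (z : Spec_r A) : Spec_r B :=
  exist _ (rclass (lift (rep z))) (ex_intro _ (lift (rep z)) erefl).

Lemma gmapK z : spec_map iota (gmap z) = z.
Proof.
apply: spec_eq; rewrite spec_map_rep [RHS]rep_spec; apply: class_eq.
have h : requiv (lift (rep z)) (rep (gmap z)).
  have := rep_in (gmap z); by [].
apply: requiv_trans (requiv_sym (rpull_requiv iota h)) _.
exact: requiv_sym (pull_lift _).
Qed.

Lemma spec_map_bij : bijective (spec_map iota).
Proof.
exists gmap; last exact: gmapK.
move=> x; apply: spec_map_inj; exact: gmapK.
Qed.
End U.

Theorem proposition2p3 (A : comPzRingType) (j : {rmorphism Rreal -> A})
  (B : comPzRingType) (iota : {rmorphism A -> B}) :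
  substitution_property iota ->
  bijective (spec_map iota) /\
  continuous_wrt (@rs_open B) (@rs_open A) (spec_map iota) /\
  continuous_wrt (@con_open B) (@con_open A) (spec_map iota).
Proof.
move=> H; split; first exact: spec_map_bij H.
split; [exact: cont_rs | exact: cont_con].
Qed.
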